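(* Fix $\eta>0$. Consider the following game between Learner, Reality and $N$ experts. At each step $t=1,2,\dots$: each Expert $n$ ($n=1,\dots,N$) announces a prediction $\gamma_t^n\in[0,1]$ and a loss function $\lambda_t^n\in\mathcal{L}$ that is required to be $\eta$-mixable; then Learner announces $\pi_t\in[0,1]$; then Reality announces $\omega_t\in\{0,1\}$. Learner has a strategy that guarantees, for all $T\ge1$ and all $n=1,\dots,N$, $$\sum_{t=1}^T\lambda_t^n(\pi_t,\omega_t)\le\sum_{t=1}^T\lambda_t^n(\gamma_t^n,\omega_t)+\frac{\ln N}{\eta}.$$
   Context: A loss function is a map $\lambda:[0,1]\times\{0,1\}\to[0,\infty]$ satisfying: (1) $\lambda(\gamma,0)$ and $\lambda(\gamma,1)$ are continuous in $\gamma\in[0,1]$ (with the standard topology on $[0,\infty]$); (2) there exists $\gamma$ with $\lambda(\gamma,0),\lambda(\gamma,1)$ both finite; (3) there is no $\gamma$ with both infinite. The superprediction set is $\Sigma_\lambda=\{(x,y)\in[0,\infty)^2:\exists\gamma\ \lambda(\gamma,0)\le x,\ \lambda(\gamma,1)\le y\}$. For $\eta>0$, $\lambda$ is $\eta$-mixable if $\{(e^{-\eta x},e^{-\eta y}):(x,y)\in\Sigma_\lambda\}$ is convex; mixable if $\eta$-mixable for some $\eta>0$. $\lambda$ is proper if $\pi\lambda(\pi,1)+(1-\pi)\lambda(\pi,0)\le\pi\lambda(\pi',1)+(1-\pi)\lambda(\pi',0)$ for all $\pi,\pi'\in[0,1]$. $\mathcal{L}$ is the set of loss functions that are both mixable and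 proper. *)

(* Defs.v *)
From HB Require Import structures.
From mathcomp Require Import all_boot all_order all_algebra.
From mathcomp Require Import all_classical all_reals all_analysis.
Set Implicit Arguments. Unset Strict Implicit. Unset Printing Implicit Defensive.
Import Order.TTheory GRing.Theory Num.Theory.
Import numFieldNormedType.Exports.
Local Open Scope classical_set_scope.
Local Open Scope ring_scope.

(* A (candidate) loss function: lam gamma omega, with omega : bool
   (false = 0, true = 1) and values in \bar R; only gamma in [0,1] matters. *)
Definition lossfun (R : realType) := R -> bool -> \bar R.

Definition in01 (R : realType) (x : R) : Prop := 0 <= x <= 1.

Definition is_loss (R : realType) (lam : lossfun R) : Prop :=
  [/\ (forall g b, in01 g -> (0 <= lam g b)%E),
      (forall b, {within `[0, 1], continuous (fun g => lam g b)}),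
      (exists g, in01 g /\ lam g false \is a fin_num /\ lam g true \is a fin_num)
    & ~ (exists g, in01 g /\ lam g false = +oo%E /\ lam g true = +oo%E)].

Definition superpred (R : realType) (lam : lossfun R) : set (R * R) :=
  [set p | 0 <= p.1 /\ 0 <= p.2 /\
     exists g, in01 g /\ (lam g false <= p.1%:E)%E /\ (lam g true <= p.2%:E)%E].

Definition convex_set2 (R : realType) (S : set (R * R)) : Prop :=
  forall u v, S u -> S v -> forall a : R, in01 a ->
    S (a * u.1 + (1 - a) * v.1, a * u.2 + (1 - a) * v.2).

Definition mixable_at (R : realType) (eta : R) (lam : lossfun R) : Prop :=
  convex_set2 [set (expR (- (eta * p.1)), expR (- (eta * p.2))) | p in superpred lam].

Definition mixable (R : realType) (lam : lossfun R) : Prop :=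
  exists eta : R, 0 < eta /\ mixable_at eta lam.

Definition proper_loss (R : realType) (lam : lossfun R) : Prop :=
  forall p p' : R, in01 p -> in01 p' ->
    (p%:E * lam p true + (1 - p)%:E * lam p false <=
     p%:E * lam p' true + (1 - p)%:E * lam p' false)%E.

Definition in_L (R : realType) (lam : lossfun R) : Prop :=
  [/\ is_loss lam, mixable lam & proper_loss lam].

Definition experts_move (R : realType) (N : nat) := ('I_N -> R * lossfun R)%type.
Definition round (R : realType) (N : nat) := (experts_move R N * bool)%type.

(* A Learner strategy maps the history of past rounds (experts' moves and
   outcomes; Learner's own past moves are determined by the strategy) and
   the current experts' move to a prediction. *)
Definition strategy (R : realType) (N : nat) :=
  seq (round R N) -> experts_move R N -> R.

(* Rounds are indexed t = 0, 1, 2, ... *)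
Definition history (R : realType) (N : nat) (gam : nat -> 'I_N -> R)
  (lam : nat -> 'I_N -> lossfun R) (om : nat -> bool) (t : nat) : seq (round R N) :=
  [seq ((fun n => (gam s n, lam s n)), om s) | s <- iota 0 t].

Definition learner_pred (R : realType) (N : nat) (S : strategy R N)
  (gam : nat -> 'I_N -> R) (lam : nat -> 'I_N -> lossfun R) (om : nat -> bool)
  (t : nat) : R :=
  S (history gam lam om t) (fun n => (gam t n, lam t n)).

(* Main.v *)
Require Import Defs.
From HB Require Import structures.
From mathcomp Require Import all_boot all_order all_algebra.
From mathcomp Require Import all_classical all_reals all_analysis.
From mathcomp Require Import ring lra.
Import Order.TTheory GRing.Theory Num.Theory.
Import numFieldNormedType.Exports.
Local Open Scope classical_set_scope.
Local Open Scope ring_scope.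

Section FO.
Context (R : realType).

Lemma ln_ge1V {z : R} : 0 < z -> 1 - z^-1 <= ln z.
Proof.
move=> z0.
have h := @le_ln1Dx R (z^-1 - 1).
have : -1 < z^-1 - 1 by rewrite ltrBrDr addrC subrr invr_gt0.
move/h; rewrite addrC subrK lnV ?posrE //; lra.
Qed.

Lemma first_order (p u0 u1 a0 a1 : R) : 0 <= p <= 1 -> 0 < u0 -> 0 < u1 ->
  0 < a0 -> 0 < a1 ->
  (forall e, 0 < e <= 1 ->
     (1 - p) * ln (e * a0 + (1 - e) * u0) + p * ln (e * a1 + (1 - e) * u1)
     <= (1 - p) * ln u0 + p * ln u1) ->
  (1 - p) * a0 * u1 + p * a1 * u0 <= u0 * u1.
Proof.
move=> /andP[p0 p1] u00 u10 a00 a10 H.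
pose s0 := a0 / u0 - 1; pose s1 := a1 / u1 - 1.
have hs0 : a0 = u0 * (1 + s0) by rewrite /s0 addrC subrK mulrC mulfVK // gt_eqF.
have hs1 : a1 = u1 * (1 + s1) by rewrite /s1 addrC subrK mulrC mulfVK // gt_eqF.
have s0g : 0 < 1 + s0 by rewrite /s0 addrC subrK divr_gt0.
have s1g : 0 < 1 + s1 by rewrite /s1 addrC subrK divr_gt0.
have key : forall e, 0 < e <= 1 -> (1 - p) * s0 + p * s1 + e * (s0 * s1) <= 0.
  move=> e /andP[e0 e1].
  pose z0 := 1 + e * s0; pose z1 := 1 + e * s1.
  have z00 : 0 < z0 by rewrite /z0; nra.
  have z10 : 0 < z1 by rewrite /z1; nra.
  have X0 : e * a0 + (1 - e) * u0 = u0 * z0 by rewrite hs0 /z0; ring.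
  have X1 : e * a1 + (1 - e) * u1 = u1 * z1 by rewrite hs1 /z1; ring.
  have := H e (introT andP (conj e0 e1)).
  rewrite X0 X1 !lnM ?posrE // => h.
  have h2 : (1 - p) * ln z0 + p * ln z1 <= 0 by lra.
  have l0 := ln_ge1V z00; have l1 := ln_ge1V z10.
  have h3 : (1 - p) * (1 - z0^-1) + p * (1 - z1^-1) <= 0.
    apply: le_trans h2; apply: lerD; apply: ler_wpM2l => //; lra.
  have q0 : z0 * z0^-1 = 1 by rewrite mulfV // gt_eqF.
  have q1 : z1 * z1^-1 = 1 by rewrite mulfV // gt_eqF.
  have q0p : 0 < z0^-1 by rewrite invr_gt0.
  have q1p : 0 < z1^-1 by rewrite invr_gt0.
  have h4 : z0 * z1 * ((1 - p) * (1 - z0^-1) + p * (1 - z1^-1)) <= 0.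
    by rewrite pmulr_rle0 // mulr_gt0.
  have h5 : z0 * z1 * ((1 - p) * (1 - z0^-1) + p * (1 - z1^-1))
            = e * ((1 - p) * s0 + p * s1 + e * (s0 * s1)).
    have -> : z0 * z1 * ((1 - p) * (1 - z0^-1) + p * (1 - z1^-1)) =
       (1 - p) * z1 * (z0 - z0 * z0^-1) + p * z0 * (z1 - z1 * z1^-1) by ring.
    rewrite q0 q1 /z0 /z1; ring.
  by move: h4; rewrite h5 pmulr_rle0.
have D0 : (1 - p) * s0 + p * s1 <= 0.
  case: (leP 0 (s0 * s1)) => hs.
    have := key 1 (introT andP (conj ltr01 (lexx 1))); lra.
  rewrite leNgt; apply/negP => hD.
  pose e := Num.min 1 (((1 - p) * s0 + p * s1) / (- (s0 * s1) * 2)).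
  have e0 : 0 < e by rewrite lt_min ltr01 divr_gt0 // mulr_gt0 // oppr_gt0.
  have e1 : e <= 1 by rewrite ge_min lexx.
  have e2 : e * (- (s0 * s1) * 2) <= (1 - p) * s0 + p * s1.
    rewrite -ler_pdivlMr ?mulr_gt0 ?oppr_gt0 //; by rewrite ge_min lexx orbT.
  have := key e (introT andP (conj e0 e1)).
  nra.
rewrite hs0 hs1.
have -> : (1 - p) * (u0 * (1 + s0)) * u1 + p * (u1 * (1 + s1)) * u0
   = u0 * u1 * (1 + ((1 - p) * s0 + p * s1)) by ring.
have := mulr_gt0 u00 u10; nra.
Qed.
Lemma near_interior (p : R) (P : R -> Prop) : in01 p ->
  (\forall x \near within `[0, 1] (nbhs p), P x) ->
  exists x, 0 < x < 1 /\ P x.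
Proof.
move=> /andP[p0 p1] /nbhs_ballP [e e0 he].
pose t := Num.min 1 e.
have t0 : 0 < t by rewrite lt_min ltr01 e0.
have t1 : t <= 1 by rewrite ge_min lexx.
have te : t <= e by rewrite ge_min lexx orbT.
exists ((1 - t) * p + t / 2).
have hx : 0 < (1 - t) * p + t / 2 < 1.
  apply/andP; split; nra.
split => //; apply: he.
- rewrite /ball /= .
  have -> : p - ((1 - t) * p + t / 2) = t * (p - 1/2) by field.
  rewrite normrM gtr0_norm //.
  have : `|p - 1/2| <= 1/2.
    rewrite ler_norml; apply/andP; split; lra.
  nra.
- by rewrite /= in_itv /=; apply/andP; split; apply: ltW; case/andP: hx.
Qed.

Lemma in01_int {p : R} : 0 < p < 1 -> in01 p.
Proof. by case/andP => h1 h2; rewrite /in01 (ltW h1) (ltW h2). Qed.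

Lemma in01_0 : in01 (0 : R). Proof. by rewrite /in01 lexx ler01. Qed.

Lemma in01_1 : in01 (1 : R). Proof. by rewrite /in01 lexx ler01. Qed.

Lemma closure01 (f : R -> R) c x : f @ within `[0, 1] (nbhs x) --> f x ->
  in01 x -> (forall y, 0 < y < 1 -> f y <= c) -> f x <= c.
Proof.
move=> hf x01 H; rewrite leNgt; apply/negP => h.
have hF : Filter (within `[0, 1] (nbhs x)) by apply: within_filter.
have := @cvgr_gt _ _ _ hF f (f x) hf c h.
move/(near_interior _ _ x01) => [y [y01 fy]].
by have := H y y01; rewrite leNgt fy.
Qed.
End FO.
Arguments in01_int {R p}.
Arguments in01_0 {R}.
Arguments in01_1 {R}.
Arguments closure01 {R f c x}.
Arguments near_interior {R} p P.

Section Core.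
Context (R : realType) (N : nat) (w : 'I_N -> R) (Uf : 'I_N -> bool -> R -> R)
  (A : 'I_N -> bool -> R).
Hypotheses (hw : forall n, 0 <= w n) (hA : forall n b, 0 <= A n b)
  (hU0 : forall n b x, in01 x -> 0 <= Uf n b x)
  (hUint : forall n b x, 0 < x < 1 -> 0 < Uf n b x)
  (hUc : forall n b x, in01 x ->
     Uf n b @ within `[0, 1] (nbhs x) --> Uf n b x)
  (hE0 : forall n, A n false <= Uf n false 0) (hP0 : forall n, 0 < Uf n false 0)
  (hE1 : forall n, A n true <= Uf n true 1) (hP1 : forall n, 0 < Uf n true 1)
  (hkey : forall n x, in01 x ->
     (1 - x) * A n false * Uf n true x + x * A n true * Uf n false x
     <= Uf n false x * Uf n true x).

Let S b x := \sum_(n < N) w n * A n b / Uf n b x.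
Let W := \sum_(n < N) w n.

Definition goodc x := in01 x /\ forall b,
  (forall n, 0 < w n * A n b -> 0 < Uf n b x) /\
  \sum_(n < N) w n * A n b / Uf n b x <= \sum_(n < N) w n.

Lemma W_ge0 : 0 <= W. Proof. exact: sumr_ge0. Qed.

Lemma S_ge_term b x n : in01 x -> w n * A n b / Uf n b x <= S b x.
Proof.
move=> x01; rewrite /S (bigD1 n) //= lerDl; apply: sumr_ge0 => i _.
by apply: divr_ge0; [apply: mulr_ge0 | apply: hU0].
Qed.

Lemma F1 x : 0 < x < 1 -> (1 - x) * S false x + x * S true x <= W.
Proof.
move=> x01; rewrite /S /W !mulr_sumr -big_split /=; apply: ler_sum => n _.
have u0 := hUint n false x x01; have u1 := hUint n true x x01.
have k := hkey n x (in01_int x01).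
have e : (1 - x) * (w n * A n false / Uf n false x) + x * (w n * A n true / Uf n true x)
  = w n * (((1 - x) * A n false * Uf n true x + x * A n true * Uf n false x)
      / (Uf n false x * Uf n true x)).
  by field; rewrite !gt_eqF.
rewrite e; apply: ler_piMr => //.
by rewrite ler_pdivrMr ?mulr_gt0 // mul1r.
Qed.

Lemma cvg_sumI {T} (F : set_system T) {FF : Filter F} (f : 'I_N -> T -> R) (l : 'I_N -> R) :
  (forall n, f n @ F --> l n) -> (fun x => \sum_(n < N) f n x) @ F --> \sum_(n < N) l n.
Proof.
move=> h; apply: (@cvg_big _ _ +%R 0 xpredT _ _ F (index_enum _) f l) => //.
exact: add_continuous.
Qed.

Lemma S_cvg b p : in01 p -> (forall n, 0 < w n * A n b -> 0 < Uf n b p) ->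
  S b @ within `[0, 1] (nbhs p) --> S b p.
Proof.
move=> p01 hpos; have hF : Filter (within `[0, 1] (nbhs p)) by apply: within_filter.
apply: (@cvg_sumI _ _ hF (fun n x => w n * A n b / Uf n b x)) => n.
have [c0|cpos] := eqVneq (w n * A n b) 0.
  rewrite c0; under eq_cvg do rewrite mul0r; rewrite mul0r; exact: cvg_cst.
have cp : 0 < w n * A n b by rewrite lt_neqAle eq_sym cpos mulr_ge0.
apply: cvgMl_tmp; apply: cvgV; first by rewrite gt_eqF // hpos.
exact: hUc.
Qed.

Lemma endpt p b : in01 p -> (forall x, 0 < x < 1 -> S b x <= W) ->
  (forall n, 0 < w n * A n b -> 0 < Uf n b p) /\ S b p <= W.
Proof.
move=> p01 H.
have hF : Filter (within `[0, 1] (nbhs p)) by apply: within_filter.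
have hpos : forall n, 0 < w n * A n b -> 0 < Uf n b p.
  move=> n cp; rewrite lt_neqAle hU0 // andbT; apply/negP => /eqP U0.
  have hc : 0 < w n * A n b / (W + 1) by rewrite divr_gt0 // ltr_wpDl // W_ge0.
  have hc' : Uf n b p < w n * A n b / (W + 1) by rewrite -U0.
  have := @cvgr_lt _ _ _ hF (Uf n b) (Uf n b p) (hUc n b p p01) _ hc'.
  move/(near_interior _ _ p01) => [x [x01 hx]].
  have ux := hUint n b x x01.
  have := S_ge_term b x n (in01_int x01); have := H x x01.
  have : W + 1 < w n * A n b / Uf n b x.
    by rewrite ltr_pdivlMr // mulrC -ltr_pdivlMr // ltr_wpDl ?W_ge0.
  lra.
split => //.
exact: (closure01 (S_cvg b p p01 hpos) p01 H).
Qed.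

Lemma Uint_cvg n b (y : R) : 0 < y < 1 -> Uf n b @ nbhs y --> Uf n b y.
Proof.
move=> y01; have := hUc n b y (in01_int y01).
rewrite within_interior //.
rewrite interior_itv_bnd /= in_itv /=; exact: y01.
Qed.

Lemma S_int_cvg b (y : R) : 0 < y < 1 -> S b @ nbhs y --> S b y.
Proof.
move=> y01.
apply: (@cvg_sumI _ _ _ (fun n x => w n * A n b / Uf n b x)) => n.
apply: cvgMl_tmp; apply: cvgV; first by rewrite gt_eqF // hUint.
exact: Uint_cvg.
Qed.

Lemma ivt_help (lo hi : R) : 0 < lo -> lo <= hi -> hi < 1 ->
  Num.min (S true lo - S false lo) (S true hi - S false hi) <= 0 <=
  Num.max (S true lo - S false lo) (S true hi - S false hi) ->
  exists x, goodc x.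
Proof.
move=> lo0 lohi hi1 hm.
have := @IVT R (fun x => S true x - S false x) lo hi 0 lohi _ hm.
case.
  apply: continuous_in_subspaceT => y; rewrite inE /= in_itv /= => /andP[ly yh].
  have y01 : 0 < y < 1 by rewrite (lt_le_trans lo0 ly) (le_lt_trans yh hi1).
  apply: cvgB; exact: S_int_cvg.
move=> y; rewrite in_itv /= => /andP[ly yh] gy.
have y01 : 0 < y < 1 by rewrite (lt_le_trans lo0 ly) (le_lt_trans yh hi1).
have := F1 y y01; have e : S true y = S false y by lra.
rewrite e -mulrDl subrK mul1r => h.
exists y; split; first exact: in01_int.
move=> b; split; first by move=> n _; exact: hUint.
by case: b; rewrite -/(S _ _) ?e.
Qed.

Lemma core_exists : exists x, goodc x.
Proof.
have [P0|] := pselect (forall x, 0 < x < 1 -> S true x <= W).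
  exists 0; split; first exact: in01_0.
  case.
  - exact: (endpt 0 true in01_0 P0).
  - split; first by move=> n _; exact: hP0.
    apply: ler_sum => n _.
    have hP := (hP0, hP1).
    rewrite -mulrA; apply: ler_piMr => //.
    by rewrite ler_pdivrMr // mul1r.
move/existsNP => [a /not_implyP [a01 /negP]]; rewrite -ltNge => Sa.
have [P1|] := pselect (forall x, 0 < x < 1 -> S false x <= W).
  exists 1; split; first exact: in01_1.
  case.
  - split; first by move=> n _; exact: hP1.
    apply: ler_sum => n _.
    have hP := (hP0, hP1).
    rewrite -mulrA; apply: ler_piMr => //.
    by rewrite ler_pdivrMr // mul1r.
  - exact: (endpt 1 false in01_1 P1).
move/existsNP => [c /not_implyP [c01 /negP]]; rewrite -ltNge => Sc.
have W0 := W_ge0.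
have ga : 0 < S true a - S false a.
  have := F1 a a01; case/andP: a01 => a0 a1; rewrite subr_gt0; nra.
have gc : S true c - S false c < 0.
  have := F1 c c01; case/andP: c01 => c0 c1; rewrite subr_lt0; nra.
case/andP: (a01) => a0 a1; case/andP: (c01) => c0 c1.
have [ac|ca] := leP a c.
  apply: (ivt_help a c a0 ac c1).
  by rewrite ge_min le_max (ltW gc) (ltW ga) orbT.
apply: (ivt_help c a c0 (ltW ca) a1).
by rewrite ge_min le_max (ltW gc) (ltW ga) orbT.
Qed.

End Core.

Section Ex.
Context (R : realType) (eta : R) (eta0 : 0 < eta).

Definition ex (x : \bar R) : R :=
  match x with EFin r => expR (- (eta * r)) | +oo%E => 0 | -oo%E => 1 end.

Lemma ex_cont (x : \bar R) : x != -oo%E -> {for x, continuous ex}.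
Proof.
case: x => [r| |] // _.
- apply/cvgrPdist_lt => e e0 /=.
  have hc : {for r, continuous (fun y : R => expR (- (eta * y)))}.
    apply: continuous_comp; last exact: continuous_expR.
    apply: continuousN; apply: continuousM; [exact: cvg_cst | exact: cvg_id].
  by move/cvgrPdist_lt : hc => /(_ e e0).
- apply/(@cvgrPdist_lt _ _ _ (nbhs (+oo%E : \bar R))) => e e0 /=.
  exists (- (ln e) / eta + 1); split; first exact: num_real.
  case => [s| |] //=; rewrite ?lte_fin => /ltW hs.
  + rewrite sub0r normrN gtr0_norm ?expR_gt0 //.
    have -> : e = expR (ln e) by rewrite lnK // posrE.
    rewrite ltr_expR.
    have : eta * (- ln e / eta + 1) <= eta * s by rewrite ler_pM2l.
    have -> : eta * (- ln e / eta + 1) = - ln e + eta.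
      by rewrite mulrDr mulr1 mulrC -mulrA mulVf ?gt_eqF // mulr1.
    move: eta0; lra.
  + by rewrite subrr normr0.
Qed.

Lemma ex_ge0 x : 0 <= ex x.
Proof. by case: x => [r| |] //=; rewrite ?expR_ge0. Qed.

Lemma ex_le1 x : (0 <= x)%E -> ex x <= 1.
Proof.
case: x => [r| |] //=; rewrite ?lee_fin => r0.
by rewrite expR_le1 oppr_le0 mulr_ge0 // ltW.
Qed.

Lemma ex_gt0 x : (0 <= x)%E -> x \is a fin_num -> 0 < ex x.
Proof. by case: x => [r| |] //= _ _; rewrite expR_gt0. Qed.

Lemma ex_anti x y : (0 <= x)%E -> (x <= y)%E -> ex y <= ex x.
Proof.
case: x => [r| |]; case: y => [s| |] //=; rewrite ?lee_fin => r0 rs.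
- by rewrite ler_expR lerN2 ler_pM2l.
Qed.

Definition U (l : lossfun R) (b : bool) (p : R) : R := ex (l p b).

Lemma U_cont l b : is_loss l -> {within `[0, 1], continuous (U l b)}.
Proof.
case=> hge hc _ _.
apply: within_continuous_comp; last exact: hc.
move=> _ /set_mem [p /= p01 <-].
apply: ex_cont; apply/negP => /eqP h.
have : (0 <= l p b)%E by apply: hge; move: p01; rewrite /in01 in_itv.
by rewrite h.
Qed.


Lemma loss_ge0 (l : lossfun R) (p : R) (b : bool) : is_loss l -> in01 p -> (0 <= l p b)%E.
Proof. by case=> h _ _ _ /h. Qed.



Lemma fin_le {x y : \bar R} : (0 <= x)%E -> (x <= y)%E -> y \is a fin_num ->
  x \is a fin_num.
Proof.
case: x => [r| |] //; case: y => [s| |] //.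
Qed.

Lemma ge0_neqNy (x : \bar R) : (0 <= x)%E -> x != -oo%E.
Proof. by case: x. Qed.

Lemma loss_fin_int (l : lossfun R) (p : R) (b : bool) : in_L l -> 0 < p < 1 -> l p b \is a fin_num.
Proof.
case=> hl _ hp p01.
have p01' := in01_int p01.
case: (hl) => hge _ [g [g01 [fg0 fg1]]] _.
have := hp p g p01' g01.
have ge0 := hge _ _ p01'.
move: p01 => /andP[p0 p1].
have hR : (p%:E * l g true + (1 - p)%:E * l g false)%E \is a fin_num.
  by rewrite fin_numD !fin_numM.
apply: contraTT => hb.
have hinf : l p b = +oo%E.
  move: (ge0 b) hb; case: (l p b) => //.
have -> : (p%:E * l p true + (1 - p)%:E * l p false = +oo)%E.
  case: b hinf {hb} => ->.
  - rewrite gt0_muley ?lte_fin // addye //.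
    apply: ge0_neqNy; apply: mule_ge0; [by rewrite lee_fin subr_ge0 ltW | exact: ge0].
  - rewrite gt0_muley ?lte_fin ?subr_gt0 // addey //.
    apply: ge0_neqNy; apply: mule_ge0; [by rewrite lee_fin ltW | exact: ge0].
by rewrite leye_eq; apply/negP => /eqP h; rewrite h in hR.
Qed.

Lemma loss_0 (l : lossfun R) g : in_L l -> in01 g -> (l 0%R false <= l g false)%E.
Proof.
case=> _ _ hp g01.
have := hp 0 g (introT andP (conj (lexx 0) ler01)) g01.
by rewrite !mul0e !add0e subr0 !mul1e.
Qed.

Lemma loss_1 (l : lossfun R) g : in_L l -> in01 g -> (l 1%R true <= l g true)%E.
Proof.
case=> _ _ hp g01.
have := hp 1 g (introT andP (conj ler01 (lexx 1))) g01.
by rewrite subrr !mul0e !adde0 !mul1e.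
Qed.




Lemma loss_fin0 (l : lossfun R) : in_L l -> l 0 false \is a fin_num.
Proof.
move=> hL; case: (hL) => hl _ _; case: (hl) => hge _ [g [g01 [fg0 fg1]]] _.
exact: (fin_le (hge 0 false in01_0) (loss_0 l g hL g01) fg0).
Qed.

Lemma loss_fin1 (l : lossfun R) : in_L l -> l 1 true \is a fin_num.
Proof.
move=> hL; case: (hL) => hl _ _; case: (hl) => hge _ [g [g01 [fg0 fg1]]] _.
exact: (fin_le (hge 1 true in01_1) (loss_1 l g hL g01) fg1).
Qed.

Lemma Ucvg (l : lossfun R) b x : is_loss l -> in01 x ->
  U l b @ within `[0, 1] (nbhs x) --> U l b x.
Proof.
move=> hl x01; have := U_cont l b hl.
move/subspace_continuousP; apply.
by rewrite /= in_itv.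
Qed.



Lemma key_int (l : lossfun R) p g : in_L l -> mixable_at eta l ->
  0 < p < 1 -> 0 < g < 1 ->
  (1 - p) * U l false g * U l true p + p * U l true g * U l false p
  <= U l false p * U l true p.
Proof.
move=> hL hm p01 g01.
have p01' := in01_int p01; have g01' := in01_int g01.
case: (hL) => hl _ hp; case: (hl) => hge _ _ _.
have ex0 : l p false = (fine (l p false))%:E by rewrite fineK // loss_fin_int.
have ex1 : l p true = (fine (l p true))%:E by rewrite fineK // loss_fin_int.
have ey0 : l g false = (fine (l g false))%:E by rewrite fineK // loss_fin_int.
have ey1 : l g true = (fine (l g true))%:E by rewrite fineK // loss_fin_int.
move: (fine (l p false)) (fine (l p true)) (fine (l g false)) (fine (l g true))
  ex0 ex1 ey0 ey1 => x0 x1 y0 y1 ex0 ex1 ey0 ey1.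
rewrite /U ex0 ex1 ey0 ey1 /=.
have hx0 := hge p false p01'; have hx1 := hge p true p01'.
have hy0 := hge g false g01'; have hy1 := hge g true g01'.
rewrite ex0 ex1 lee_fin in hx0 hx1; rewrite ey0 ey1 lee_fin in hy0 hy1.
have [p0 p1] : 0 <= p /\ p <= 1 by case/andP: p01' => -> ->.
apply: first_order; rewrite ?expR_gt0 ?p0 ?p1 //.
move=> e /andP[e0 e1].
have My : [set (expR (- (eta * q.1)), expR (- (eta * q.2))) | q in superpred l]
            (expR (- (eta * y0)), expR (- (eta * y1))).
  exists (y0, y1) => //=; split => //; split => //; exists g.
  by rewrite ey0 ey1 !lee_fin !lexx.
have Mx : [set (expR (- (eta * q.1)), expR (- (eta * q.2))) | q in superpred l]
            (expR (- (eta * x0)), expR (- (eta * x1))).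
  exists (x0, x1) => //=; split => //; split => //; exists p.
  by rewrite ex0 ex1 !lee_fin !lexx.
have := hm _ _ My Mx e (introT andP (conj (ltW e0) e1)).
case => -[q0 q1] [/= hq0 [hq1 [g' [g'01 [hg0 hg1]]]]] [/= <- <-].
rewrite !expRK.
have hpp := hp p g' p01' g'01.
have : (p%:E * l p true + (1 - p)%:E * l p false <=
        p%:E * q1%:E + (1 - p)%:E * q0%:E)%E.
  apply: (le_trans hpp); apply: leeD; apply: lee_wpmul2l => //;
    by rewrite lee_fin ?subr_ge0.
rewrite ex0 ex1 -!EFinM -EFinD lee_fin => h.
have := eta0; nra.
Qed.

Lemma key (l : lossfun R) p g : in_L l -> mixable_at eta l ->
  in01 p -> in01 g ->
  (1 - p) * U l false g * U l true p + p * U l true g * U l false p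
  <= U l false p * U l true p.
Proof.
move=> hL hm p01 g01.
have hl : is_loss l by case: hL.
have U0 b x : 0 <= U l b x by exact: ex_ge0.
have [->|pn0] := eqVneq p 0.
  rewrite subr0 !mul0r addr0 mul1r.
  apply: ler_wpM2r => //; apply: ex_anti; last exact: loss_0.
  exact: loss_ge0 in01_0.
have [->|pn1] := eqVneq p 1.
  rewrite subrr !mul0r add0r mul1r mulrC.
  apply: ler_wpM2l => //; apply: ex_anti; last exact: loss_1.
  exact: loss_ge0 in01_1.
have p01' : 0 < p < 1.
  by case/andP: p01 => h1 h2; rewrite !lt_neqAle h1 h2 eq_sym pn0 pn1.
pose f x := (1 - p) * U l false x * U l true p + p * U l true x * U l false p.
apply: (@closure01 _ f) => //; last by move=> y y01; exact: key_int.
apply: cvgD; apply: cvgMr_tmp; apply: cvgMl_tmp; exact: Ucvg.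
Qed.

Section Game.
Context (N : nat).

Definition Amv (c : experts_move R N) n b := ex ((c n).2 (c n).1 b).
Definition Umv (c : experts_move R N) n b x := U (c n).2 b x.
Definition good (w : 'I_N -> R) c x := goodc R N w (Umv c) (Amv c) x.
Definition pick w c : R := xget 0 (good w c).
Definition upd (w : 'I_N -> R) c b x : 'I_N -> R :=
  fun n => w n * Amv c n b / Umv c n b x.
Definition Wt (h : seq (round R N)) : 'I_N -> R :=
  foldl (fun w r => upd w r.1 r.2 (pick w r.1)) (fun _ => 1) h.
Definition Sg : strategy R N := fun h c => pick (Wt h) c.

Lemma pick_in01 w c : in01 (pick w c).
Proof. by rewrite /pick; case: xgetP => [x _ [] | _] //; exact: in01_0. Qed.

Lemma pick_good w c : (forall n, 0 <= w n) -> (forall n, in01 (c n).1) ->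
  (forall n, in_L (c n).2 /\ mixable_at eta (c n).2) -> good w c (pick w c).
Proof.
move=> hw hc hL; apply: xgetPex; apply: core_exists => //.
- by move=> n b; exact: ex_ge0.
- by move=> n b x _; exact: ex_ge0.
- move=> n b x x01; apply: ex_gt0.
    by apply: loss_ge0; [case: (hL n).1 | exact: in01_int].
  by apply: loss_fin_int => //; case: (hL n).
- by move=> n b x x01; apply: Ucvg => //; case: (hL n).1.
- move=> n; apply: ex_anti; last exact: loss_0 (hL n).1 (hc n).
  by apply: loss_ge0; [case: (hL n).1 | exact: in01_0].
- move=> n; apply: ex_gt0; last exact: loss_fin0 (hL n).1.
  by apply: loss_ge0; [case: (hL n).1 | exact: in01_0].
- move=> n; apply: ex_anti; last exact: loss_1 (hL n).1 (hc n).
  by apply: loss_ge0; [case: (hL n).1 | exact: in01_1].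
- move=> n; apply: ex_gt0; last exact: loss_fin1 (hL n).1.
  by apply: loss_ge0; [case: (hL n).1 | exact: in01_1].
- move=> n x x01; apply: key => //; by case: (hL n).
Qed.


Lemma history_S (gam : nat -> 'I_N -> R) (lam : nat -> 'I_N -> lossfun R)
  (om : nat -> bool) t :
  history gam lam om t.+1 =
  rcons (history gam lam om t) ((fun n => (gam t n, lam t n)), om t).
Proof. by rewrite /history -addn1 iotaD map_cat /= cats1. Qed.

Lemma prod_expR (T : nat) (f : nat -> R) :
  \prod_(t < T) expR (f t) = expR (\sum_(t < T) f t).
Proof.
elim: T => [|T IH]; first by rewrite !big_ord0 expR0.
by rewrite !big_ord_recr /= IH expRD.
Qed.

Section Play.
Context (gam : nat -> 'I_N -> R) (lam : nat -> 'I_N -> lossfun R) (om : nat -> bool)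
  (hgam : forall t n, in01 (gam t n))
  (hlam : forall t n, in_L (lam t n) /\ mixable_at eta (lam t n)).

Let pr t := learner_pred Sg gam lam om t.
Let wt t := Wt (history gam lam om t).
Let P n t := \prod_(s < t) ex (lam s n (gam s n) (om s)).
Let Q n t := \prod_(s < t) ex (lam s n (pr s) (om s)).

Lemma wt_S t : wt t.+1 =
  upd (wt t) (fun n => (gam t n, lam t n)) (om t) (pr t).
Proof. by rewrite /wt history_S /Wt foldl_rcons. Qed.

Lemma invariant t : (forall n, 0 <= wt t n) /\ \sum_(n < N) wt t n <= N%:R /\
  forall n, wt t n * Q n t = P n t.
Proof.
elim: t => [|t [hw [hs he]]].
  split; first by move=> n; rewrite /wt /Wt /=.
  split; first by rewrite /wt /Wt /= sumr_const card_ord.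
  by move=> n; rewrite /wt /Wt /P /Q /= !big_ord0 mulr1.
have hg := pick_good (wt t) (fun n => (gam t n, lam t n)) hw
  (fun n => hgam t n) (fun n => hlam t n).
case: hg => _ /(_ (om t)) [hpos hsum].
rewrite wt_S; split; last split.
- move=> n; rewrite /upd; apply: divr_ge0; last exact: ex_ge0.
  by apply: mulr_ge0 => //; exact: ex_ge0.
- exact: le_trans hsum hs.
- move=> n.
  have eQ : Q n t.+1 = Q n t * ex (lam t n (pr t) (om t)) by rewrite /Q big_ord_recr.
  have eP : P n t.+1 = P n t * ex (lam t n (gam t n) (om t)) by rewrite /P big_ord_recr.
  rewrite eQ eP -(he n) /upd /Amv /Umv /U /=.
  have := hpos n; rewrite /Amv /Umv /U /= -/(pr t).
  have [c0|cpos] := eqVneq (wt t n * ex (lam t n (gam t n) (om t))) 0.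
    move=> _; rewrite c0 mul0r mul0r.
    by rewrite mulrAC c0 mul0r.
  move=> h.
  have cp : 0 < wt t n * ex (lam t n (gam t n) (om t)).
    by rewrite lt_neqAle eq_sym cpos mulr_ge0 // ex_ge0.
  have := h cp => up.
  by field; rewrite gt_eqF.
Qed.


Lemma final T n : (\sum_(t < T) lam t n (pr t) (om t)
   <= \sum_(t < T) lam t n (gam t n) (om t) + (ln (N%:R) / eta)%:E)%E.
Proof.
have [hw [hs he]] := invariant T.
have N0 : (0 < N)%N := leq_ltn_trans (leq0n n) (ltn_ord n).
have NR0 : (0 : R) < N%:R by rewrite ltr0n.
have wle : wt T n <= N%:R.
  apply: le_trans hs; rewrite (bigD1 n) //= lerDl; exact: sumr_ge0.
have Q0 : 0 <= Q n T by apply: prodr_ge0 => s _; exact: ex_ge0.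
have PQ : P n T <= N%:R * Q n T by rewrite -(he n) ler_wpM2r.
have gge t : (0 <= lam t n (gam t n) (om t))%E by apply: loss_ge0; [case: (hlam t n).1|].
have pge t : (0 <= lam t n (pr t) (om t))%E.
  by apply: loss_ge0; [case: (hlam t n).1| exact: pick_in01].
have [[t ht]|hfin] := pselect (exists t : 'I_T, lam t n (gam t n) (om t) = +oo%E).
  have hy : (\sum_(t < T) lam t n (gam t n) (om t) = +oo)%E.
    rewrite (bigD1 t) //= ht addye //; apply: ge0_neqNy; exact: sume_ge0.
  by rewrite hy addye //; exact: leey.
have fg (t : 'I_T) : lam t n (gam t n) (om t) \is a fin_num.
  rewrite fin_numE ge0_neqNy //=; apply/eqP => h; apply: hfin; by exists t.
pose r s := fine (lam s n (gam s n) (om s)).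
have er (t : 'I_T) : lam t n (gam t n) (om t) = (r t)%:E by rewrite /r fineK.
have eP : P n T = expR (\sum_(t < T) - (eta * r t)).
  rewrite -(prod_expR T (fun t => - (eta * r t))) /P; apply: eq_bigr => t _; by rewrite er.
have P0 : 0 < P n T by rewrite eP expR_gt0.
have Qp : 0 < Q n T.
  rewrite lt_neqAle Q0 andbT; apply/negP => /eqP hq; move: PQ; rewrite -hq mulr0.
  by rewrite leNgt P0.
have fp (t : 'I_T) : lam t n (pr t) (om t) \is a fin_num.
  rewrite fin_numE ge0_neqNy //=; apply/eqP => h.
  move: Qp; rewrite lt_neqAle => /andP[+ _]; rewrite eq_sym /Q.
  by move/prodf_neq0 => /(_ t isT) /=; rewrite h eqxx.
pose s t := fine (lam t n (pr t) (om t)).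
have es (t : 'I_T) : lam t n (pr t) (om t) = (s t)%:E by rewrite /s fineK.
have eQ : Q n T = expR (\sum_(t < T) - (eta * s t)).
  rewrite -(prod_expR T (fun t => - (eta * s t))) /Q; apply: eq_bigr => t _; by rewrite es.
rewrite [X in (X <= _)%E](eq_bigr (fun t : 'I_T => (s t)%:E)); last by move=> t _; rewrite es.
rewrite [X in (_ <= X + _)%E](eq_bigr (fun t : 'I_T => (r t)%:E)); last by move=> t _; rewrite er.
rewrite !sumEFin -EFinD lee_fin.
move: PQ; rewrite eP eQ -[N%:R](lnK (x := N%:R)) ?posrE // -expRD ler_expR.
rewrite !sumrN -!mulr_sumr.
set a := \sum_(i < T) s i; set b := \sum_(i < T) r i => h.
have : a - b <= ln N%:R / eta.
  rewrite ler_pdivlMr //; move: h; have := eta0; nra.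
rewrite expRK; lra.
Qed.
End Play.
End Game.
End Ex.


Theorem corollary1 (R : realType) (eta : R) (N : nat) :
  0 < eta ->
  exists S : strategy R N,
    (forall h c, in01 (S h c)) /\
    forall (gam : nat -> 'I_N -> R) (lam : nat -> 'I_N -> lossfun R)
           (om : nat -> bool),
      (forall t n, in01 (gam t n)) ->
      (forall t n, in_L (lam t n) /\ mixable_at eta (lam t n)) ->
      forall (T : nat) (n : 'I_N), (1 <= T)%N ->
        (\sum_(t < T) lam t n (learner_pred S gam lam om t) (om t)
         <= \sum_(t < T) lam t n (gam t n) (om t) + (ln (N%:R) / eta)%:E)%E.
Proof.
move=> eta0; exists (@Sg R eta N); split.
  by move=> h c; exact: pick_in01.
move=> gam lam om hg hl T n _.
exact: (@final R eta eta0 N gam lam om hg hl T n).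
Qed.
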